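(* Let $3\le p<n$, let $c\in\mathbb{R}^A$, let $s\in V\setminus\{n\}$, $t\in V\setminus\{0\}$ with $s\neq t$, and let $R\subseteq V\setminus\{s,t,0,n\}$ with $|R|\ge 2$. Suppose that one of the conditions (i)–(iv) below holds, and that $c_{ij}=\beta$ for all arcs $(i,j)$ of some unbalanced 1-tree $H$ on $R$. Then $c_{ij}=\beta$ for all $(i,j)\in A(R)$, and there are $\sigma,\tau$ with $c_{si}=\sigma$ and $c_{it}=\tau$ for all $i\in R$. Conditions: (i) $|R|\ge 5$ and $c_{ik}+c_{kj}=c_{il}+c_{lj}$ for all distinct $i\in R\cup\{s\}$, $j\in R\cup\{t\}$, $k,l\in R$; (ii) $|R|\ge p\ge 4$ and $c(P)$ is constant over all simple directed $(s,t)$-paths with $p$ arcs whose internal nodes lie in $R$; (iii) $|R|=p-1$, $c(P)$ is constant over all simple directed $(s,t)$-paths with $p$ arcs whose internal nodes are exactly the nodes of $R$, and for some $2\le r<p$, $c(P)$ is constant over all simple directed $(s,t)$-paths with $r$ arcs whose $r-1$ internal nodes lie in $R$; (iv) $p=3$, $|R|\ge3$, $c(P)$ is constant over all simple directed $(s,t)$-paths with 3 arcs whose internal nodes lie in $R$, and $c(P)$ is constant over all simple directed $(s,t)$-paths with 2 arcs whose inner node lies in $R$.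
   Context: Let $n$ be a positive integer, $V=\{0,1,\dots,n\}$, and let $D=(V,A)$ be the digraph whose arc set $A$ consists of all ordered pairs $(i,j)$ with $i\neq j$, $i,j\in V$, except that no arc enters node $0$, no arc leaves node $n$, and the arc $(0,n)$ is absent. $c(P)=\sum_{(i,j)\in P}c_{ij}$; $A(R)$ is the set of arcs of $A$ with both endnodes in $R$. A balanced cycle is a simple cycle of the underlying undirected graph (arcs traversed in either direction) that contains the same number of forward and backward arcs. An unbalanced 1-tree on $R$ is a set of arcs of $A(R)$ consisting of a spanning tree $T$ of $R$ (ignoring orientations) plus one further arc $(k,l)$ whose fundamental cycle with respect to $T$ is not balanced. *)

(* Defs.v *)
(* Nodes V = {0,...,n} are 'I_n.+1; node 0 is ord0, node n is ord_max. *)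
From HB Require Import structures.
From mathcomp Require Import all_boot all_order all_algebra.
From mathcomp Require Export reals.
Set Implicit Arguments. Unset Strict Implicit. Unset Printing Implicit Defensive.
Import Order.TTheory GRing.Theory Num.Theory.
Local Open Scope ring_scope.

Notation node n := 'I_n.+1.

Definition is_arc n (i j : node n) : bool :=
  [&& i != j, j != ord0, i != ord_max & ~~ ((i == ord0) && (j == ord_max))].

Definition arcsR n (Rs : {set node n}) : {set node n * node n} :=
  [set e | is_arc e.1 e.2 && ((e.1 \in Rs) && (e.2 \in Rs))].

(* A step of an undirected traversal: an arc together with its direction
   (true = traversed forward, false = backward). *)
Definition step n := ((node n * node n) * bool)%type.
Definition stail n (x : step n) : node n := if x.2 then x.1.1 else x.1.2.
Definition shead n (x : step n) : node n := if x.2 then x.1.2 else x.1.1.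

Fixpoint walk n (E : {set node n * node n}) (u v : node n) (w : seq (step n)) : bool :=
  match w with
  | [::] => u == v
  | x :: w' => [&& x.1 \in E, stail x == u & walk E (shead x) v w']
  end.

Definition is_cycle n (E : {set node n * node n}) (C : seq (step n)) : bool :=
  [&& (if C is x :: _ then walk E (stail x) (stail x) C else false),
      uniq (map fst C) & uniq (map (@stail n) C)].

Definition balanced n (C : seq (step n)) : bool :=
  count (fun x : step n => x.2) C == count (fun x : step n => ~~ x.2) C.

Definition spanning_tree n (Rs : {set node n}) (T : {set node n * node n}) : Prop :=
  [/\ T \subset arcsR Rs,
      (forall u v, u \in Rs -> v \in Rs -> exists w, walk T u v w)
    & (forall C, ~~ is_cycle T C)].

Definition unbalanced_1tree n (Rs : {set node n}) (H : {set node n * node n}) : Prop :=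
  exists T k l,
    [/\ spanning_tree Rs T, (k, l) \in arcsR Rs, (k, l) \notin T,
        H = (k, l) |: T
      & exists C, [/\ is_cycle H C, (k, l) \in map fst C & ~~ balanced C]].

Definition dipath n (s t : node n) (q : seq (node n)) : bool :=
  path (@is_arc n) s (rcons q t) && uniq (s :: rcons q t).

Definition path_cost (R : realType) n (c : node n -> node n -> R)
  (s t : node n) (q : seq (node n)) : R :=
  \sum_(e <- zip (s :: q) (rcons q t)) c e.1 e.2.

Definition const_paths (R : realType) n (c : node n -> node n -> R)
  (s t : node n) (P : seq (node n) -> bool) : Prop :=
  forall q1 q2, dipath s t q1 -> dipath s t q2 -> P q1 -> P q2 ->
    path_cost c s t q1 = path_cost c s t q2.

Definition inner_in n (Rs : {set node n}) (m : nat) (q : seq (node n)) : bool :=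
  ((size q).+1 == m)%N && all (fun x => x \in Rs) q.

(* Main.v *)
Require Import Defs.
From HB Require Import structures.
From mathcomp Require Import all_boot all_order all_algebra.
From mathcomp Require Import reals.
From mathcomp Require Import ring lra zify.
Import Order.TTheory GRing.Theory Num.Theory.
Set Implicit Arguments. Unset Strict Implicit. Unset Printing Implicit Defensive.
Local Open Scope ring_scope.

Lemma pc_nil (R : realType) n (c : node n -> node n -> R) s t :
  path_cost c s t [::] = c s t.
Proof. by rewrite /path_cost /= big_cons big_nil addr0. Qed.

Lemma pc_cons (R : realType) n (c : node n -> node n -> R) s t a q :
  path_cost c s t (a :: q) = c s a + path_cost c a t q.
Proof. by rewrite /path_cost /= big_cons. Qed.

Lemma pc_rcons (R : realType) n (c : node n -> node n -> R) s t q a :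
  path_cost c s t (rcons q a) = path_cost c s a q + c a t.
Proof.
elim: q s => [|b q IH] s /=; first by rewrite pc_cons !pc_nil.
by rewrite !pc_cons IH addrA.
Qed.

Lemma memR n (s t : node n) (Rs : {set node n}) x :
  Rs \subset ~: [set s; t; ord0; ord_max] -> x \in Rs ->
  [/\ x != s, x != t, x != ord0 & x != ord_max].
Proof.
move=> hR /(subsetP hR); rewrite !inE !negb_or => /andP [/andP [/andP [h1 h2] h3] h4].
by split.
Qed.


Lemma avoid n (Rs : {set node n}) (L : seq (node n)) :
  (size L < #|Rs|)%N -> exists x, x \in Rs /\ x \notin L.
Proof.
move=> hL.
case: (boolP [exists x, (x \in Rs) && (x \notin L)]).
  by case/existsP => x /andP [h1 h2]; exists x.
rewrite negb_exists => /forallP hall.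
have sub : Rs \subset mem L.
  apply/subsetP => x hx; move: (hall x); rewrite hx /= negbK; done.
have := subset_leq_card sub.
have := card_size L.
move=> h1 h2.
have : (#|Rs| <= size L)%N by apply: leq_trans h2 h1.
by rewrite leqNgt hL.
Qed.

Lemma fill n (Rs : {set node n}) k : forall (L : seq (node n)),
  (k + size L <= #|Rs|)%N ->
  exists F, [/\ size F = k, uniq F, {subset F <= Rs} &
                forall x, x \in L -> x \notin F].
Proof.
elim: k => [|k IH] L hk.
  by exists [::]; split => // x; rewrite in_nil.
have [x [xR xL]] : exists x, x \in Rs /\ x \notin L.
  by apply: avoid; apply: leq_trans hk; rewrite addSn ltnS leq_addl.
have hk' : (k + size (x :: L) <= #|Rs|)%N by rewrite /= addnS -addSn.
have [F [sF uF subF dF]] := IH (x :: L) hk'.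
exists (x :: F); split => //=.
- by rewrite sF.
- by rewrite uF andbT; apply: dF; rewrite inE eqxx.
- by move=> y; rewrite inE => /orP [/eqP -> | /subF].
- move=> y yL; rewrite inE negb_or dF ?inE ?yL ?orbT // andbT.
  by apply/eqP => yx; move: xL; rewrite -yx yL.
Qed.
Lemma arcRR n (s t : node n) (Rs : {set node n}) x y :
  Rs \subset ~: [set s; t; ord0; ord_max] -> x \in Rs -> y \in Rs -> x != y ->
  is_arc x y.
Proof.
move=> hR /(memR hR) [_ _ x0 xn] /(memR hR) [_ _ y0 yn] xy.
by rewrite /is_arc xy y0 xn (negbTE x0).
Qed.

Lemma dipath_ok n (s t : node n) (Rs : {set node n}) a q :
  s != ord_max -> t != ord0 -> s != t ->
  Rs \subset ~: [set s; t; ord0; ord_max] ->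
  uniq (a :: q) -> {subset a :: q <= Rs} -> dipath s t (a :: q).
Proof.
move=> hs ht hst hR hu hsub.
have aux : forall q a, uniq (a :: q) -> {subset a :: q <= Rs} ->
    path (@is_arc n) a (rcons q t).
  elim=> [|b q' IH] a' hu' hsub' /=.
    have := memR hR (hsub' a' (mem_head _ _)) => -[_ a't a'0 a'n].
    by rewrite /is_arc a't ht a'n (negbTE a'0).
  move: hu' => /= /andP [] ; rewrite inE negb_or => /andP [a'b a'q] /andP [bq uq].
  rewrite (arcRR hR) //.
  - apply: IH; first by rewrite /= bq uq.
    by move=> y hy; apply: hsub'; rewrite inE hy orbT.
  - by apply: hsub'; rewrite mem_head.
  - by apply: hsub'; rewrite !inE eqxx orbT.
have nin : forall y, y \in a :: q -> (y != s) && (y != t).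
  by move=> y /hsub /(memR hR) [-> -> _ _].
rewrite /dipath /= aux //.
have := memR hR (hsub a (mem_head _ _)) => -[as_ _ a0 an].
move: hu => /= /andP [aq uq].
have sq : s \notin q.
  by apply/negP => sq; have := nin s; rewrite inE sq orbT eqxx => /(_ isT).
have tq : t \notin q.
  by apply/negP => tq; have := nin t; rewrite inE tq orbT eqxx andbF => /(_ isT).
have ta : t != a.
  by apply/eqP => ta; have := nin a (mem_head _ _); rewrite ta eqxx andbF.
apply/and4P; split.
- rewrite /is_arc eq_sym as_ a0 hs /= andbT.
  by apply/negP => /andP [_ /eqP an']; move: an; rewrite an' eqxx.
- by rewrite inE mem_rcons !inE negb_or (negbTE sq) orbF hst eq_sym as_.
- by rewrite mem_rcons inE negb_or eq_sym ta aq.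
- by rewrite rcons_uniq tq uq.
Qed.
Lemma good n (s t : node n) (Rs : {set node n}) m q :
  s != ord_max -> t != ord0 -> s != t ->
  Rs \subset ~: [set s; t; ord0; ord_max] ->
  q != [::] -> uniq q -> {subset q <= Rs} -> (size q).+1 = m ->
  dipath s t q /\ inner_in Rs m q.
Proof.
move=> hs ht hst hR; case: q => // a q _ hu hsub hm; split.
  by apply: (dipath_ok hs ht hst hR hu hsub).
rewrite /inner_in hm eqxx /=; apply/andP; split; first by apply: hsub; exact: mem_head.
by apply/allP => x xq; apply: hsub; rewrite inE xq orbT.
Qed.

Lemma Es (R : realType) n (c : node n -> node n -> R) (s t : node n)
  (Rs : {set node n}) (m : nat) (u y v : node n) :
  s != ord_max -> t != ord0 -> s != t ->
  Rs \subset ~: [set s; t; ord0; ord_max] ->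
  (3 <= m)%N -> (m <= #|Rs|)%N -> const_paths c s t (inner_in Rs m) ->
  u \in Rs -> y \in Rs -> v \in Rs -> u != y -> v != y -> u != v ->
  c s u + c u y = c s v + c v y.
Proof.
move=> hs ht hst hR m3 mR hc uR yR vR uy vy uv.
have hk : (m - 3 + size [:: u; y; v] <= #|Rs|)%N by rewrite /= subnK.
have [F [sF uF subF dF]] := @fill n Rs (m - 3) [:: u; y; v] hk.
have hsz : (size (u :: y :: F)).+1 = m by rewrite /= sF -addn3 subnK.
have hsz' : (size (v :: y :: F)).+1 = m by rewrite /= sF -addn3 subnK.
have hsub : forall w, w \in Rs -> {subset w :: y :: F <= Rs}.
  by move=> w wR x; rewrite !inE => /orP [/eqP -> // | /orP [/eqP -> // | /subF]].
have [d1 i1] := @good n s t Rs m (u :: y :: F) hs ht hst hR isT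
  ltac:(by rewrite /= !inE negb_or uy (dF u) ?inE ?eqxx // (dF y) ?inE ?eqxx ?orbT)
  (hsub u uR) hsz.
have [d2 i2] := @good n s t Rs m (v :: y :: F) hs ht hst hR isT
  ltac:(by rewrite /= !inE negb_or vy (dF v) ?inE ?eqxx ?orbT // (dF y) ?inE ?eqxx ?orbT)
  (hsub v vR) hsz'.
have := hc _ _ d1 d2 i1 i2; rewrite !pc_cons.
by move=> h; lra.
Qed.
Ltac leaf dF := solve [ by [] | by rewrite eq_sym | by apply: dF; rewrite !inE eqxx ?orbT ].
Ltac uniqt dF := rewrite /= ?inE ?negb_or;
  repeat (apply/andP; split); leaf dF.
Ltac uniqr dF := rewrite rcons_uniq mem_rcons rcons_uniq /= ?inE ?negb_or;
  repeat (apply/andP; split); leaf dF.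

Lemma Et (R : realType) n (c : node n -> node n -> R) (s t : node n)
  (Rs : {set node n}) (m : nat) (x u v : node n) :
  s != ord_max -> t != ord0 -> s != t ->
  Rs \subset ~: [set s; t; ord0; ord_max] ->
  (3 <= m)%N -> (m <= #|Rs|)%N -> const_paths c s t (inner_in Rs m) ->
  x \in Rs -> u \in Rs -> v \in Rs -> x != u -> x != v -> u != v ->
  c x u + c u t = c x v + c v t.
Proof.
move=> hs ht hst hR m3 mR hc xR uR vR xu xv uv.
have hk : (m - 3 + size [:: x; u; v] <= #|Rs|)%N by rewrite /= subnK.
have [F [sF uF subF dF]] := @fill n Rs (m - 3) [:: x; u; v] hk.
have hsz : forall w, (size (rcons (rcons F x) w)).+1 = m.
  by move=> w; rewrite !size_rcons sF -addn3 subnK.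
have hsub : forall w, w \in Rs -> {subset rcons (rcons F x) w <= Rs}.
  by move=> w wR z; rewrite mem_rcons inE mem_rcons inE => /orP [/eqP -> // | /orP [/eqP -> // | /subF]].
have ne : forall w, rcons (rcons F x) w != [::] by move=> w; rewrite -size_eq0 size_rcons.
have [d1 i1] := @good n s t Rs m (rcons (rcons F x) u) hs ht hst hR (ne u)
  ltac:(uniqr dF) (hsub u uR) (hsz u).
have [d2 i2] := @good n s t Rs m (rcons (rcons F x) v) hs ht hst hR (ne v)
  ltac:(uniqr dF) (hsub v vR) (hsz v).
have := hc _ _ d1 d2 i1 i2; rewrite !pc_rcons.
by move=> h; lra.
Qed.

Lemma Exy (R : realType) n (c : node n -> node n -> R) (s t : node n)
  (Rs : {set node n}) (m : nat) (x u y v : node n) :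
  s != ord_max -> t != ord0 -> s != t ->
  Rs \subset ~: [set s; t; ord0; ord_max] ->
  (4 <= m)%N -> (m <= #|Rs|)%N -> const_paths c s t (inner_in Rs m) ->
  x \in Rs -> u \in Rs -> y \in Rs -> v \in Rs -> uniq [:: x; u; y; v] ->
  c x u + c u y = c x v + c v y.
Proof.
move=> hs ht hst hR m4 mR hc xR uR yR vR.
rewrite /= !inE !negb_or => /and4P [/and3P [xu xy xv] /andP [uy uv] yv _].
have hk : (m - 4 + size [:: x; u; y; v] <= #|Rs|)%N by rewrite /= subnK.
have [F [sF uF subF dF]] := @fill n Rs (m - 4) [:: x; u; y; v] hk.
have hsz : forall w, (size (x :: w :: y :: F)).+1 = m.
  by move=> w; rewrite /= sF -addn4 subnK.
have hsub : forall w, w \in Rs -> {subset x :: w :: y :: F <= Rs}.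
  by move=> w wR z; rewrite !inE => /orP [/eqP -> // | /orP [/eqP -> // | /orP [/eqP -> //| /subF]]].
have [d1 i1] := @good n s t Rs m (x :: u :: y :: F) hs ht hst hR isT
  ltac:(uniqt dF) (hsub u uR) (hsz u).
have [d2 i2] := @good n s t Rs m (x :: v :: y :: F) hs ht hst hR isT
  ltac:(uniqt dF) (hsub v vR) (hsz v).
have := hc _ _ d1 d2 i1 i2; rewrite !pc_cons.
by move=> h; lra.
Qed.
Definition hamP n (Rs : {set node n}) p (q : seq (node n)) :=
  ((size q).+1 == p)%N && ([set x in q] == Rs).

Lemma hamgood n (s t : node n) (Rs : {set node n}) p q :
  s != ord_max -> t != ord0 -> s != t ->
  Rs \subset ~: [set s; t; ord0; ord_max] ->
  #|Rs| = p.-1 -> (0 < p)%N ->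
  q != [::] -> uniq q -> {subset q <= Rs} -> {subset Rs <= q} ->
  dipath s t q /\ hamP Rs p q.
Proof.
move=> hs ht hst hR hc p0 qn hu hsub hsup; split.
  by case: q qn hu hsub {hsup} => // a q _ hu hsub; apply: (dipath_ok hs ht hst hR hu hsub).
have eqi : q =i Rs by move=> x; apply/idP/idP => [/hsub|/hsup].
rewrite /hamP; apply/andP; split.
  by rewrite -(card_uniqP hu) (eq_card eqi) hc prednK.
by apply/eqP/setP => x; rewrite inE eqi.
Qed.

Lemma S1 (R : realType) n (c : node n -> node n -> R) (s t : node n)
  (Rs : {set node n}) (p : nat) (a b z : node n) :
  s != ord_max -> t != ord0 -> s != t ->
  Rs \subset ~: [set s; t; ord0; ord_max] ->
  #|Rs| = p.-1 -> (0 < p)%N -> const_paths c s t (hamP Rs p) ->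
  a \in Rs -> b \in Rs -> z \in Rs -> a != b -> a != z -> b != z ->
  c s a + c a b + c b z = c s b + c b a + c a z /\
  c z a + c a b + c b t = c z b + c b a + c a t.
Proof.
move=> hs ht hst hR hc p0 hH aR bR zR ab az bz.
set W := enum [set x in Rs | x \notin [:: a; b; z]].
have dF : forall x, x \in [:: a; b; z] -> x \notin W.
  by move=> x hx; rewrite mem_enum inE hx andbF.
have uF : uniq W by apply: enum_uniq.
have subF : {subset W <= Rs} by move=> x; rewrite mem_enum inE => /andP [].
have inW : forall x, x \in Rs -> x \notin [:: a; b; z] -> x \in W.
  by move=> x xR xn; rewrite mem_enum inE xR xn.
have hx3 : forall x, x \in Rs -> [\/ x = a, x = b, x = z | x \in W].
  move=> x xR; case: (boolP (x \in [:: a; b; z])) => hx; last by apply: Or44; apply: inW.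
  move: hx; rewrite !inE => /or3P [] /eqP ->; [exact: Or41|exact: Or42|exact: Or43].
clearbody W.
have sub1 : forall x, x \in [:: a; b; z] -> x \in Rs.
  by move=> x; rewrite !inE => /orP [/eqP -> | /orP [/eqP -> | /eqP ->]].
split.
- have U1 : uniq (a :: b :: z :: W) by uniqt dF.
  have S1 : {subset (a :: b :: z :: W) <= Rs}.
    by move=> x; rewrite !in_cons => /orP [/eqP -> // | /orP [/eqP -> // | /orP [/eqP -> // | /subF]]].
  have S2 : {subset Rs <= (a :: b :: z :: W)}.
    by move=> x /hx3 [->|->|->|xW]; rewrite !in_cons ?eqxx ?xW ?orbT.
  have [d1 i1] := @hamgood n s t Rs p (a :: b :: z :: W) hs ht hst hR hc p0 isT
    ltac:(uniqt dF)
    ltac:(by move=> x; rewrite !in_cons => /orP [/eqP -> // | /orP [/eqP -> // | /orP [/eqP -> // | /subF]]])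
    ltac:(by move=> x /hx3 [->|->|->|xW]; rewrite !in_cons ?eqxx ?xW ?orbT).
  have [d2 i2] := @hamgood n s t Rs p (b :: a :: z :: W) hs ht hst hR hc p0 isT
    ltac:(uniqt dF)
    ltac:(by move=> x; rewrite !in_cons => /orP [/eqP -> // | /orP [/eqP -> // | /orP [/eqP -> // | /subF]]])
    ltac:(by move=> x /hx3 [->|->|->|xW]; rewrite !in_cons ?eqxx ?xW ?orbT).
  have := hH _ _ d1 d2 i1 i2; rewrite !pc_cons.
  by move=> h; lra.
- have ne : forall a' b', rcons (rcons (rcons W z) a') b' != [::].
    by move=> a' b'; rewrite -size_eq0 size_rcons.
  have [d1 i1] := @hamgood n s t Rs p (rcons (rcons (rcons W z) a) b) hs ht hst hR hc p0 (ne a b)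
    ltac:(rewrite !rcons_uniq !(mem_rcons, in_cons) ?negb_or; repeat (apply/andP; split); leaf dF)
    ltac:(by move=> x; rewrite !(mem_rcons, in_cons) => /orP [/eqP -> // | /orP [/eqP -> // | /orP [/eqP -> // | /subF]]])
    ltac:(by move=> x /hx3 [->|->|->|xW]; rewrite !(mem_rcons, in_cons) ?eqxx ?xW ?orbT).
  have [d2 i2] := @hamgood n s t Rs p (rcons (rcons (rcons W z) b) a) hs ht hst hR hc p0 (ne b a)
    ltac:(rewrite !rcons_uniq !(mem_rcons, in_cons) ?negb_or; repeat (apply/andP; split); leaf dF)
    ltac:(by move=> x; rewrite !(mem_rcons, in_cons) => /orP [/eqP -> // | /orP [/eqP -> // | /orP [/eqP -> // | /subF]]])
    ltac:(by move=> x /hx3 [->|->|->|xW]; rewrite !(mem_rcons, in_cons) ?eqxx ?xW ?orbT).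
  have := hH _ _ d1 d2 i1 i2; rewrite !pc_rcons.
  by move=> h; lra.
Qed.
Lemma chain (R : realType) n (Rs : {set node n}) (f : node n -> node n -> R) :
  (2 < #|Rs|)%N ->
  (forall a a' b, a \in Rs -> a' \in Rs -> b \in Rs -> a != a' -> a != b -> a' != b ->
     f a b = f a' b) ->
  (forall a b b', a \in Rs -> b \in Rs -> b' \in Rs -> a != b -> a != b' -> b != b' ->
     f a b = f a b') ->
  forall a b a0 b0, a \in Rs -> b \in Rs -> a0 \in Rs -> b0 \in Rs -> a != b -> a0 != b0 ->
  f a b = f a0 b0.
Proof.
move=> h3 h1 h2.
have h1' : forall a a' b, a \in Rs -> a' \in Rs -> b \in Rs -> a != b -> a' != b ->
     f a b = f a' b.
  move=> a a' b aR a'R bR ab a'b; case: (eqVneq a a') => [-> // | aa'].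
  exact: h1.
have h2' : forall a b b', a \in Rs -> b \in Rs -> b' \in Rs -> a != b -> a != b' ->
     f a b = f a b'.
  move=> a b b' aR bR b'R ab ab'; case: (eqVneq b b') => [-> // | bb'].
  exact: h2.
move=> a b a0 b0 aR bR a0R b0R ab a0b0.
case: (eqVneq a0 b) => [a0b | a0b].
- subst a0.
  have [q [qR]] : exists q, q \in Rs /\ q \notin [:: a; b] by apply: avoid.
  rewrite !inE negb_or => /andP [qa qb].
  rewrite (h2 a b q) // 1?eq_sym //.
  rewrite (h1' a b q) // 1?eq_sym //.
  by apply: h2' => //; rewrite eq_sym.
- by rewrite (h1' a a0 b) // (h2' a0 b b0).
Qed.

Lemma walk_pot (R : realType) n (E : {set node n * node n}) (pi : node n -> R) (d : R) :
  (forall e, e \in E -> pi e.1 - pi e.2 = d) ->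
  forall w u v, walk E u v w ->
  pi u - pi v = ((count (fun x : step n => x.2) w)%:R -
                 (count (fun x : step n => ~~ x.2) w)%:R) * d.
Proof.
move=> hE; elim=> [|[[i j] b] w IH] u v /=.
  by move=> /eqP ->; rewrite !subrr mul0r.
move=> /and3P [eE /eqP tu hw].
have := IH _ _ hw; have := hE _ eE => /= hd.
rewrite /stail /shead /= in tu hw *.
case: b tu hw => /= <- hw hIH; rewrite !natrD.
  have -> : pi i - pi v = d + ((count (fun x : step n => x.2) w)%:R -
                 (count (fun x : step n => ~~ x.2) w)%:R) * d by lra.
  by ring.
have -> : pi j - pi v = - d + ((count (fun x : step n => x.2) w)%:R -
               (count (fun x : step n => ~~ x.2) w)%:R) * d by lra.
by ring.
Qed.
Lemma combine (R : realType) n (c : node n -> node n -> R) (s t : node n)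
  (Rs : {set node n}) (beta K3 K2 : R) :
  (forall a b, a \in Rs -> b \in Rs -> a != b -> c s a + c a b + c b t = K3) ->
  (forall a, a \in Rs -> c s a + c a t = K2) ->
  (exists a, a \in Rs) ->
  (exists H, unbalanced_1tree Rs H /\ forall e, e \in H -> c e.1 e.2 = beta) ->
  (forall e, e \in arcsR Rs -> c e.1 e.2 = beta) /\
  exists sigma tau, forall i, i \in Rs -> c s i = sigma /\ c i t = tau.
Proof.
move=> h3 h2 [a0 a0R] [H [[T [k [l [[Tsub Tconn _] klA klT HE [C [Ccyc _ Cunb]]]]]] hc]].
pose pi := fun a => c a t.
have pot : forall e, e \in arcsR Rs -> c e.1 e.2 = pi e.1 - pi e.2 + (K3 - K2).
  case=> i j; rewrite inE /= => /andP [/andP [ij _] /andP [iR jR]].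
  have := h3 i j iR jR ij; have := h2 i iR; have := h2 j jR; rewrite /pi.
  by move=> *; lra.
have HA : forall e, e \in H -> e \in arcsR Rs.
  move=> e; rewrite HE in_setU1 => /orP [/eqP -> // | eT].
  exact: (subsetP Tsub).
have hd : forall e, e \in H -> pi e.1 - pi e.2 = beta - (K3 - K2).
  by move=> e eH; have := pot e (HA e eH); rewrite hc //; move=> h; lra.
have bb : beta - (K3 - K2) = 0.
  move: Ccyc Cunb; rewrite /is_cycle /balanced.
  case: C => // x C' /and3P [hw _ _] hne.
  have := walk_pot hd hw; rewrite subrr => /esym /eqP; rewrite mulf_eq0.
  case/orP => [|/eqP //].
  by rewrite subr_eq0 eqr_nat (negbTE hne).
have hdT : forall e, e \in T -> pi e.1 - pi e.2 = 0.
  by move=> e eT; rewrite -bb; apply: hd; rewrite HE in_setU1 eT orbT.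
have piC : forall u v, u \in Rs -> v \in Rs -> pi u = pi v.
  move=> u v uR vR; have [w hw] := Tconn u v uR vR.
  by have := walk_pot hdT hw; rewrite mulr0 => /eqP; rewrite subr_eq0 => /eqP.
split.
  move=> e eA; rewrite pot //.
  move: eA; case: e => i j; rewrite inE /= => /andP [_ /andP [iR jR]].
  by rewrite (piC i j iR jR); lra.
exists (K2 - pi a0), (pi a0) => i iR; split.
  by have := h2 i iR; rewrite (piC a0 i a0R iR) /pi; move=> h; lra.
exact: (piC i a0 iR a0R).
Qed.
Definition Gp (R : realType) n (c : node n -> node n -> R) (s t : node n) (Rs : {set node n}) :=
  forall a b a0 b0, a \in Rs -> b \in Rs -> a0 \in Rs -> b0 \in Rs -> a != b -> a0 != b0 ->
  c s a + c a b + c b t = c s a0 + c a0 b0 + c b0 t.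
Definition K2p (R : realType) n (c : node n -> node n -> R) (s t : node n) (Rs : {set node n}) :=
  forall a a0, a \in Rs -> a0 \in Rs -> c s a + c a t = c s a0 + c a0 t.

Lemma fromPairs (R : realType) n (c : node n -> node n -> R) (s t : node n)
  (Rs : {set node n}) (beta : R) :
  (1 < #|Rs|)%N -> Gp c s t Rs -> K2p c s t Rs ->
  (exists H, unbalanced_1tree Rs H /\ forall e, e \in H -> c e.1 e.2 = beta) ->
  (forall e, e \in arcsR Rs -> c e.1 e.2 = beta) /\
  exists sigma tau, forall i, i \in Rs -> c s i = sigma /\ c i t = tau.
Proof.
move=> h2 hG hK hH.
have [a0 [a0R _]] : exists x, x \in Rs /\ x \notin [::] by apply: (@avoid n Rs [::]); apply: ltnW.
have [b0 [b0R]] : exists x, x \in Rs /\ x \notin [:: a0] by apply: avoid.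
rewrite inE => b0a0.
apply: (@combine R n c s t Rs beta (c s b0 + c b0 a0 + c a0 t) (c s a0 + c a0 t)) => //.
- by move=> a b aR bR ab; apply: hG.
- by move=> a aR; apply: hK.
- by exists a0.
Qed.

Lemma caseM (R : realType) n (c : node n -> node n -> R) (s t : node n)
  (Rs : {set node n}) (m : nat) :
  s != ord_max -> t != ord0 -> s != t ->
  Rs \subset ~: [set s; t; ord0; ord_max] ->
  (4 <= m)%N -> (m <= #|Rs|)%N -> const_paths c s t (inner_in Rs m) ->
  Gp c s t Rs /\ K2p c s t Rs.
Proof.
move=> hs ht hst hR m4 mR hc.
have m3 : (3 <= m)%N by apply: ltnW.
have R3 : (2 < #|Rs|)%N by apply: leq_trans mR.
have hG : Gp c s t Rs.
  move=> a b a0 b0; apply: (@chain R n Rs (fun a b => c s a + c a b + c b t)) => //.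
    move=> x x' y xR x'R yR xx' xy x'y.
    have := Es hs ht hst hR m3 mR hc xR yR x'R xy x'y xx'.
    by move=> h; lra.
  move=> x y y' xR yR y'R xy xy' yy'.
  have := Et hs ht hst hR m3 mR hc xR yR y'R xy xy' yy'.
  by move=> h; lra.
split => // a a0 aR a0R.
case: (eqVneq a a0) => [-> // | aa0].
have [x [xR]] : exists x, x \in Rs /\ x \notin [:: a; a0].
  by apply: avoid; apply: leq_trans mR.
rewrite !inE negb_or => /andP [xa xa0].
have [y [yR]] : exists z, z \in Rs /\ z \notin [:: x; a; a0].
  by apply: avoid; apply: leq_trans mR.
rewrite !inE !negb_or => /and3P [yx ya ya0].
have hu : uniq [:: x; a; y; a0].
  by rewrite /= !inE !negb_or; repeat (apply/andP; split); rewrite // eq_sym.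
have := Exy hs ht hst hR m4 mR hc xR aR yR a0R hu.
have ay : a != y by rewrite eq_sym.
have a0y : a0 != y by rewrite eq_sym.
have := hG a y x a aR yR xR aR ay xa.
have := hG x a0 x a xR a0R xR aR xa0 xa.
have := hG a0 y x a a0R yR xR aR a0y xa.
by move=> *; lra.
Qed.
Ltac uq := rewrite /= ?inE ?negb_or; repeat (apply/andP; split); solve [by [] | by rewrite eq_sym].

Lemma pathG3 (R : realType) n (c : node n -> node n -> R) (s t : node n)
  (Rs : {set node n}) :
  s != ord_max -> t != ord0 -> s != t ->
  Rs \subset ~: [set s; t; ord0; ord_max] ->
  const_paths c s t (inner_in Rs 3) -> Gp c s t Rs.
Proof.
move=> hs ht hst hR hc a b a0 b0 aR bR a0R b0R ab a0b0.
have sub : forall x y, x \in Rs -> y \in Rs -> {subset [:: x; y] <= Rs}.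
  by move=> x y xR yR z; rewrite !inE => /orP [/eqP -> | /eqP ->].
have [d1 i1] := @good n s t Rs 3 [:: a; b] hs ht hst hR isT
  ltac:(by rewrite /= inE ab) (sub a b aR bR) (erefl _).
have [d2 i2] := @good n s t Rs 3 [:: a0; b0] hs ht hst hR isT
  ltac:(by rewrite /= inE a0b0) (sub a0 b0 a0R b0R) (erefl _).
have := hc _ _ d1 d2 i1 i2; rewrite !pc_cons !pc_nil.
by move=> h; lra.
Qed.

Lemma pathK2 (R : realType) n (c : node n -> node n -> R) (s t : node n)
  (Rs : {set node n}) :
  s != ord_max -> t != ord0 -> s != t ->
  Rs \subset ~: [set s; t; ord0; ord_max] ->
  const_paths c s t (inner_in Rs 2) -> K2p c s t Rs.
Proof.
move=> hs ht hst hR hc a a0 aR a0R.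
have sub : forall x, x \in Rs -> {subset [:: x] <= Rs}.
  by move=> x xR z; rewrite !inE => /eqP ->.
have [d1 i1] := @good n s t Rs 2 [:: a] hs ht hst hR isT isT (sub a aR) (erefl _).
have [d2 i2] := @good n s t Rs 2 [:: a0] hs ht hst hR isT isT (sub a0 a0R) (erefl _).
have := hc _ _ d1 d2 i1 i2; rewrite !pc_cons !pc_nil.
by move=> h; lra.
Qed.

Lemma two_elems n (Rs : {set node n}) a b :
  #|Rs| = 2 -> a \in Rs -> b \in Rs -> a != b -> {subset Rs <= [:: a; b]}.
Proof.
move=> h2 aR bR ab x xR; apply/negPn/negP => hx.
have u : uniq [:: x; a; b] by rewrite /= hx inE ab.
have sub : [:: x; a; b] \subset Rs.
  apply/subsetP => z; rewrite !inE => /orP [/eqP -> // | /orP [/eqP -> // | /eqP -> //]].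
have := subset_leq_card sub; rewrite h2 (card_uniqP u) //.
Qed.

Lemma ham2 (R : realType) n (c : node n -> node n -> R) (s t : node n)
  (Rs : {set node n}) :
  s != ord_max -> t != ord0 -> s != t ->
  Rs \subset ~: [set s; t; ord0; ord_max] ->
  #|Rs| = 2 -> const_paths c s t (hamP Rs 3) -> Gp c s t Rs.
Proof.
move=> hs ht hst hR h2 hc a b a0 b0 aR bR a0R b0R ab a0b0.
have sub : forall x y, x \in Rs -> y \in Rs -> {subset [:: x; y] <= Rs}.
  by move=> x y xR yR z; rewrite !inE => /orP [/eqP -> | /eqP ->].
have [d1 i1] := @hamgood n s t Rs 3 [:: a; b] hs ht hst hR h2 isT isT
  ltac:(by rewrite /= inE ab) (sub a b aR bR) (two_elems h2 aR bR ab).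
have [d2 i2] := @hamgood n s t Rs 3 [:: a0; b0] hs ht hst hR h2 isT isT
  ltac:(by rewrite /= inE a0b0) (sub a0 b0 a0R b0R) (two_elems h2 a0R b0R a0b0).
have := hc _ _ d1 d2 i1 i2; rewrite !pc_cons !pc_nil.
by move=> h; lra.
Qed.

Lemma triple (R : realType) n (c : node n -> node n -> R) (s t : node n)
  (Rs : {set node n}) (p : nat) (a b z : node n) :
  s != ord_max -> t != ord0 -> s != t ->
  Rs \subset ~: [set s; t; ord0; ord_max] ->
  #|Rs| = p.-1 -> (0 < p)%N -> const_paths c s t (hamP Rs p) -> K2p c s t Rs ->
  a \in Rs -> b \in Rs -> z \in Rs -> a != b -> a != z -> b != z ->
  c s a + c a b + c b t = c s z + c z b + c b t /\
  c s a + c a b + c b t = c s a + c a z + c z t.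
Proof.
move=> hs ht hst hR hc p0 hH hK aR bR zR ab az bz.
have ba : b != a by rewrite eq_sym.
have za : z != a by rewrite eq_sym.
have zb : z != b by rewrite eq_sym.
have [e1 f1] := S1 hs ht hst hR hc p0 hH aR bR zR ab az bz.
have [e2 f2] := S1 hs ht hst hR hc p0 hH bR aR zR ba bz az.
have [e3 f3] := S1 hs ht hst hR hc p0 hH aR zR bR az ab zb.
have [e4 f4] := S1 hs ht hst hR hc p0 hH zR aR bR za zb ab.
have [e5 f5] := S1 hs ht hst hR hc p0 hH bR zR aR bz ba za.
have [e6 f6] := S1 hs ht hst hR hc p0 hH zR bR aR zb za ba.
have k1 := hK a b aR bR.
have k2 := hK a z aR zR.
by split; lra.
Qed.
Theorem corollary5 (R : realType) (n p : nat) (c : node n -> node n -> R)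
  (s t : node n) (Rs : {set node n}) (beta : R) :
  (3 <= p)%N -> (p < n)%N ->
  s != ord_max -> t != ord0 -> s != t ->
  Rs \subset ~: [set s; t; ord0; ord_max] -> (2 <= #|Rs|)%N ->
  (* (i) *)
  ( ((5 <= #|Rs|)%N /\
     forall i j k l, i \in s |: Rs -> j \in t |: Rs -> k \in Rs -> l \in Rs ->
       uniq [:: i; j; k; l] -> c i k + c k j = c i l + c l j)
  (* (ii) *)
  \/ [/\ (4 <= p)%N, (p <= #|Rs|)%N & const_paths c s t (inner_in Rs p)]
  (* (iii) *)
  \/ [/\ #|Rs| = p.-1,
         const_paths c s t (fun q => ((size q).+1 == p)%N && ([set x in q] == Rs))
       & exists r, (2 <= r < p)%N /\ const_paths c s t (inner_in Rs r)]
  (* (iv) *)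
  \/ [/\ p = 3%N, (3 <= #|Rs|)%N, const_paths c s t (inner_in Rs 3)
       & const_paths c s t (inner_in Rs 2)] ) ->
  (exists H, unbalanced_1tree Rs H /\ forall e, e \in H -> c e.1 e.2 = beta) ->
  (forall e, e \in arcsR Rs -> c e.1 e.2 = beta) /\
  exists sigma tau, forall i, i \in Rs -> c s i = sigma /\ c i t = tau.
Proof.
move=> p3 pn hs ht hst hR R2 hcase hH.
have [hG hK] : Gp c s t Rs /\ K2p c s t Rs; last exact: fromPairs R2 hG hK hH.
case: hcase => [[h5 hE] | [[p4 pR hc] | [[hcard hHam [r [hr hcr]]] | [p3' h3 hc3 hc2]]]].
-
  have sS : s \in s |: Rs by rewrite in_setU1 eqxx.
  have tT : t \in t |: Rs by rewrite in_setU1 eqxx.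
  have RS : forall x, x \in Rs -> x \in s |: Rs by move=> x xR; rewrite in_setU1 xR orbT.
  have RT : forall x, x \in Rs -> x \in t |: Rs by move=> x xR; rewrite in_setU1 xR orbT.
  split.
    move=> a b a0 b0; apply: (@chain R n Rs (fun a b => c s a + c a b + c b t)).
    + by apply: leq_trans h5.
    + move=> x x' y xR x'R yR xx' xy x'y.
      have [xs _ _ _] := memR hR xR; have [x's _ _ _] := memR hR x'R.
      have [ys _ _ _] := memR hR yR.
      have := hE s y x x' sS (RT y yR) xR x'R ltac:(uq).
      by move=> h /=; lra.
    + move=> x y y' xR yR y'R xy xy' yy'.
      have [_ xt _ _] := memR hR xR; have [_ yt _ _] := memR hR yR.
      have [_ y't _ _] := memR hR y'R.
      have := hE x t y y' (RS x xR) tT yR y'R ltac:(uq).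
      by move=> h /=; lra.
  move=> a a0 aR a0R; case: (eqVneq a a0) => [-> // | aa0].
  have [as_ at_ _ _] := memR hR aR; have [a0s a0t _ _] := memR hR a0R.
  exact: hE s t a a0 sS tT aR a0R ltac:(uq).
-
  exact: caseM hs ht hst hR p4 pR hc.
-
  have p0 : (0 < p)%N by apply: leq_trans p3.
  have pe : p = (#|Rs|).+1 by rewrite hcard prednK.
  move: hr; case: r hcr => [|[|[|[|r]]]] hcr // hr.
  + (* r = 2 *)
    have hK := pathK2 hs ht hst hR hcr.
    split => //.
    case: (ltnP 3 p) => hp.
    * move=> a b a0 b0; apply: (@chain R n Rs (fun a b => c s a + c a b + c b t)).
      -- by rewrite -ltnS -pe.
      -- move=> x x' y xR x'R yR xx' xy x'y.
         have yx' : y != x' by rewrite eq_sym.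
         by have [e _] := triple hs ht hst hR hcard p0 hHam hK xR yR x'R xy xx' yx'.
      -- move=> x y y' xR yR y'R xy xy' yy'.
         by have [_ e] := triple hs ht hst hR hcard p0 hHam hK xR yR y'R xy xy' yy'.
    * have p3e : p = 3 by apply/eqP; rewrite eqn_leq hp p3.
      have h2 : #|Rs| = 2 by rewrite hcard p3e.
      rewrite p3e in hHam.
      exact: (ham2 hs ht hst hR h2 hHam).
  + (* r = 3 *)
    have hG := pathG3 hs ht hst hR hcr.
    split => // a a0 aR a0R; case: (eqVneq a a0) => [-> // | aa0].
    have [z [zR]] : exists z, z \in Rs /\ z \notin [:: a; a0].
      by apply: avoid; rewrite /= -ltnS -pe.
    rewrite !inE negb_or => /andP [za za0].
    have a0a : a0 != a by rewrite eq_sym.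
    have az : a != z by rewrite eq_sym.
    have a0z : a0 != z by rewrite eq_sym.
    have [e1 _] := S1 hs ht hst hR hcard p0 hHam aR a0R zR aa0 az a0z.
    have := hG a0 a a a0 a0R aR aR a0R a0a aa0.
    have := hG a0 z a a0 a0R zR aR a0R a0z aa0.
    have := hG a z a a0 aR zR aR a0R az aa0.
    by move=> *; lra.
  + (* r >= 4 *)
    apply: (caseM hs ht hst hR _ _ hcr) => //.
    by rewrite -ltnS -pe.
-
  by split; [apply: (pathG3 hs ht hst hR hc3) | apply: (pathK2 hs ht hst hR hc2)].
Qed.
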